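(* In the setting of a domain $U\subset\mathbb{R}^n$ with $\mathbb{R}^{>0}U\subset U$ and a smooth positive homogeneous function $h$ of degree $k>1$ on $U$ for which $g_U=-\partial^2h$ restricts to a positive definite metric on $\{h=1\}$, let for $c\in\mathbb{R}$ $$g'_c:=-\partial^2\log(h+c)=\frac1{h+c}g_U+\frac1{(h+c)^2}(dh)^2$$ on $U_c:=\{x\in U\mid h(x)+c>0\}$ if $c\le0$ and $U_c:=\{x\in U\mid h(x)-c(k-1)>0\}$ if $c>0$. Then: (1) $g'_c=\frac1{h+c}\check g+\frac{h-c(k-1)}{kh}\frac1{(h+c)^2}(dh)^2$, where $\check g=g_U-\frac{g_U(\xi,\cdot)^2}{g_U(\xi,\xi)}$ and $\xi=\sum x^i\partial_{x^i}$; (2) $g'_c$ is a Riemannian metric on $U_c$; (3) if $cc'>0$, then $(U_c,g'_c)$ and $(U_{c'},g'_{c'})$ are isometric, an isometry being given by restriction of a suitable scalar multiplication $x\mapsto\lambda x$, $\lambda>0$.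
   Context: $\partial^2$ denotes the real Hessian with respect to the linear coordinates $x^1,\dots,x^n$. It is known (and may be used) that $\check g$ is positive semidefinite with kernel $\mathbb{R}\xi$ and $g_U=\check g-\frac{k-1}{kh}(dh)^2$. *)

(* Defs.v *)
(* A point/vector of R^n is represented as a function  nat -> R ;
   only the coordinates 0..n-1 matter (points of U are required to have
   zero coordinates from n on). *)
From Stdlib Require Import Reals Lra Lia Classical ClassicalEpsilon.
Open Scope R_scope.

Definition vec := nat -> R.

Fixpoint fsum (m : nat) (f : nat -> R) : R :=
  match m with O => 0 | S p => fsum p f + f p end.

Definition ebasis (i : nat) : vec := fun j => if Nat.eqb i j then 1 else 0.

Definition vscale (l : R) (x : vec) : vec := fun j => l * x j.

Definition shift (x : vec) (i : nat) (t : R) : vec := fun j => x j + t * ebasis i j.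

Definition has_partial (i : nat) (f : vec -> R) (x : vec) : Prop :=
  exists l, derivable_pt_lim (fun t => f (shift x i t)) 0 l.

(* the partial derivative d f / d x^i at x (chosen classically;
   meaningful where it exists) *)
Definition partial (i : nat) (f : vec -> R) (x : vec) : R :=
  epsilon (inhabits 0) (fun l => derivable_pt_lim (fun t => f (shift x i t)) 0 l).

Definition in_Rn (n : nat) (x : vec) : Prop := forall i, (n <= i)%nat -> x i = 0.

Definition open_in (n : nat) (U : vec -> Prop) : Prop :=
  (forall x, U x -> in_Rn n x) /\
  (forall x, U x -> exists d, 0 < d /\
     forall y, in_Rn n y -> (forall i, (i < n)%nat -> Rabs (y i - x i) < d) -> U y).

Definition connected_in (n : nat) (U : vec -> Prop) : Prop :=
  forall A B : vec -> Prop, open_in n A -> open_in n B ->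
    (forall x, U x -> A x \/ B x) ->
    (exists x, U x /\ A x) -> (exists x, U x /\ B x) ->
    exists x, U x /\ A x /\ B x.

Definition domain (n : nat) (U : vec -> Prop) : Prop :=
  open_in n U /\ connected_in n U /\ exists x, U x.

Definition continuous_on (n : nat) (U : vec -> Prop) (f : vec -> R) : Prop :=
  forall x, U x -> forall eps, 0 < eps -> exists d, 0 < d /\
    forall y, U y -> (forall i, (i < n)%nat -> Rabs (y i - x i) < d) ->
      Rabs (f y - f x) < eps.

Fixpoint Ck (n m : nat) (U : vec -> Prop) (f : vec -> R) : Prop :=
  match m with
  | O => continuous_on n U f
  | S p => continuous_on n U f /\
           (forall i x, (i < n)%nat -> U x -> has_partial i f x) /\
           (forall i, (i < n)%nat -> Ck n p U (partial i f))
  end.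

Definition smooth_on (n : nat) (U : vec -> Prop) (f : vec -> R) : Prop :=
  forall m, Ck n m U f.

Definition hess (f : vec -> R) (x : vec) (i j : nat) : R :=
  partial i (partial j f) x.

Definition bil (n : nat) (A : nat -> nat -> R) (v w : vec) : R :=
  fsum n (fun i => fsum n (fun j => A i j * v i * w j)).

Definition gU (n : nat) (h : vec -> R) (x v w : vec) : R := - bil n (hess h x) v w.

Definition dh (n : nat) (h : vec -> R) (x v : vec) : R :=
  fsum n (fun i => partial i h x * v i).

(* check g = g_U - g_U(xi,.)^2 / g_U(xi,xi), xi_x = x (Euler field) *)
Definition gcheck (n : nat) (h : vec -> R) (x v w : vec) : R :=
  gU n h x v w - gU n h x x v * gU n h x x w / gU n h x x x.

Definition gprime (n : nat) (h : vec -> R) (c : R) (x v w : vec) : R :=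
  - bil n (hess (fun y => ln (h y + c)) x) v w.

Definition Uc (U : vec -> Prop) (h : vec -> R) (k c : R) (x : vec) : Prop :=
  U x /\ (if Rle_dec c 0 then h x + c > 0 else h x - c * (k - 1) > 0).

Definition nonzero_vec (n : nat) (v : vec) : Prop := exists i, (i < n)%nat /\ v i <> 0.

(* Main.v *)
Require Import Defs.
From Stdlib Require Import Reals Lra Lia FunctionalExtensionality ClassicalEpsilon Classical.
Open Scope R_scope.

Lemma fsum_ext m f g : (forall i, (i < m)%nat -> f i = g i) -> fsum m f = fsum m g.
Proof. induction m; simpl; intros H; auto. rewrite IHm by (intros; apply H; lia). rewrite (H m) by lia. auto. Qed.

Lemma fsum_plus m f g : fsum m (fun i => f i + g i) = fsum m f + fsum m g.
Proof. induction m; simpl; [lra|]. rewrite IHm; lra. Qed.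

Lemma fsum_scal m c f : fsum m (fun i => c * f i) = c * fsum m f.
Proof. induction m; simpl; [lra|]. rewrite IHm; lra. Qed.

Lemma fsum_zero m f : (forall i, (i < m)%nat -> f i = 0) -> fsum m f = 0.
Proof. intros H. rewrite (fsum_ext m f (fun _ => 0)) by auto. clear H. induction m; simpl; auto; lra. Qed.

Lemma fsum_swap m p F : fsum m (fun i => fsum p (fun j => F i j)) = fsum p (fun j => fsum m (fun i => F i j)).
Proof. induction m; simpl. - symmetry; apply fsum_zero; auto.
 - rewrite IHm. rewrite <- fsum_plus. auto. Qed.

Lemma fsum_abs_le m f i : (i < m)%nat -> Rabs (f i) <= fsum m (fun j => Rabs (f j)).
Proof. induction m; intros H; [lia|]. simpl.
 assert (0 <= fsum m (fun j => Rabs (f j))).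
 { clear. induction m; simpl; [lra|]. pose proof (Rabs_pos (f m)); lra. }
 destruct (Nat.eq_dec i m). subst; lra. pose proof (IHm ltac:(lia)). pose proof (Rabs_pos (f m)); lra. Qed.

Lemma fsum_abs_nonneg m f : 0 <= fsum m (fun j => Rabs (f j)).
Proof. induction m; simpl; [lra|]. pose proof (Rabs_pos (f m)); lra. Qed.

Lemma D_ext f g x l : (forall t, f t = g t) -> derivable_pt_lim f x l -> derivable_pt_lim g x l.
Proof. intros E H. assert (f = g) by (apply functional_extensionality; auto). subst; auto. Qed.

Lemma D_local f g x l d : 0 < d -> (forall t, Rabs (t - x) < d -> f t = g t) ->
  derivable_pt_lim f x l -> derivable_pt_lim g x l.
Proof. intros Hd E H eps Heps. destruct (H eps Heps) as [del Hdel].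
 assert (0 < Rmin del d) by (apply Rmin_pos; [apply cond_pos|lra]).
 exists (mkposreal _ H0). intros h Hh Hl. simpl in Hl.
 rewrite <- (E (x+h)), <- (E x). apply Hdel; auto. apply Rlt_le_trans with (1 := Hl); apply Rmin_l.
 rewrite Rminus_diag, Rabs_R0; lra.
 replace (x + h - x) with h by ring. apply Rlt_le_trans with (1 := Hl); apply Rmin_r. Qed.

Lemma D_translate g s l : derivable_pt_lim (fun t => g (s + t)) 0 l -> derivable_pt_lim g s l.
Proof. intros H eps Heps. destruct (H eps Heps) as [del Hdel]. exists del. intros h Hh Hl.
 specialize (Hdel h Hh Hl). rewrite Rplus_0_l, Rplus_0_r in Hdel. auto. Qed.

Lemma D_translate' g s l : derivable_pt_lim g s l -> derivable_pt_lim (fun t => g (s + t)) 0 l.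
Proof. intros H eps Heps. destruct (H eps Heps) as [del Hdel]. exists del. intros h Hh Hl.
 rewrite Rplus_0_l, Rplus_0_r. auto. Qed.

Lemma D_plus f g x a b : derivable_pt_lim f x a -> derivable_pt_lim g x b ->
  derivable_pt_lim (fun t => f t + g t) x (a + b).
Proof. intros; apply (derivable_pt_lim_plus f g); auto. Qed.
Lemma D_minus f g x a b : derivable_pt_lim f x a -> derivable_pt_lim g x b ->
  derivable_pt_lim (fun t => f t - g t) x (a - b).
Proof. intros; apply (derivable_pt_lim_minus f g); auto. Qed.
Lemma D_mult f g x a b : derivable_pt_lim f x a -> derivable_pt_lim g x b ->
  derivable_pt_lim (fun t => f t * g t) x (a * g x + f x * b).
Proof. intros; apply (derivable_pt_lim_mult f g); auto. Qed.
Lemma D_const c x : derivable_pt_lim (fun _ => c) x 0.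
Proof. apply (derivable_pt_lim_const c). Qed.
Lemma D_id x : derivable_pt_lim (fun t => t) x 1.
Proof. apply derivable_pt_lim_id. Qed.
Lemma D_comp f1 f2 x l1 l2 : derivable_pt_lim f1 x l1 -> derivable_pt_lim f2 (f1 x) l2 ->
  derivable_pt_lim (fun t => f2 (f1 t)) x (l2 * l1).
Proof. intros; apply (derivable_pt_lim_comp f1 f2); auto. Qed.
Lemma D_scal c f x l : derivable_pt_lim f x l -> derivable_pt_lim (fun t => c * f t) x (c * l).
Proof. intros; apply (derivable_pt_lim_scal f c); auto. Qed.
Lemma D_inv f x l : derivable_pt_lim f x l -> f x <> 0 ->
  derivable_pt_lim (fun t => / f t) x (- l / (f x)^2).
Proof. intros H Hn. pose proof (derivable_pt_lim_div (fun _ => 1) f x 0 l (D_const 1 x) H Hn).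
 unfold div_fct in H0. eapply D_ext in H0. 2: { intros t. simpl. unfold Rdiv. rewrite Rmult_1_l. reflexivity. }
 replace (- l / f x ^ 2) with ((0 * f x - l * 1) / (f x)²) by (unfold Rsqr; field; auto). auto. Qed.
Lemma D_ln f x l : derivable_pt_lim f x l -> 0 < f x ->
  derivable_pt_lim (fun t => ln (f t)) x (l / f x).
Proof. intros H Hp. replace (l / f x) with (/ f x * l) by (unfold Rdiv; ring).
 apply D_comp; auto. apply derivable_pt_lim_ln; auto. Qed.

Lemma D_lin a x : derivable_pt_lim (fun t => a * t) x a.
Proof. pose proof (D_scal a _ x _ (D_id x)) as H. rewrite Rmult_1_r in H. exact H. Qed.

Lemma MVT_sym g g' T : (forall s, Rabs s <= Rabs T -> derivable_pt_lim g s (g' s)) ->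
  exists s, Rabs s <= Rabs T /\ g T - g 0 = g' s * T.
Proof. intros H. destruct (Rtotal_order T 0) as [Hn|[Hz|Hp]].
 - destruct (MVT_cor2 g g' T 0 Hn) as [c [Hc1 Hc2]].
   { intros c Hc. apply H. rewrite !Rabs_left1 by lra. lra. }
   exists c. split. rewrite !Rabs_left1 by lra. lra. replace (g T - g 0) with (- (g 0 - g T)) by ring. rewrite Hc1. ring.
 - subst. exists 0. split. rewrite Rabs_R0; lra. ring.
 - destruct (MVT_cor2 g g' 0 T Hp) as [c [Hc1 Hc2]].
   { intros c Hc. apply H. rewrite !Rabs_right by lra. lra. }
   exists c. split. rewrite !Rabs_right by lra. lra. rewrite Hc1. ring. Qed.

Definition close (n : nat) (d : R) (y x : vec) := forall i, (i < n)%nat -> Rabs (y i - x i) < d.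
Definition pd (i : nat) (f : vec -> R) (x : vec) (l : R) := derivable_pt_lim (fun t => f (shift x i t)) 0 l.

Lemma partial_spec i f x : has_partial i f x -> pd i f x (partial i f x).
Proof. intros H. unfold partial. apply (epsilon_spec (inhabits 0) (fun l => derivable_pt_lim (fun t => f (shift x i t)) 0 l)). exact H. Qed.

Lemma partial_eq i f x l : pd i f x l -> has_partial i f x /\ partial i f x = l.
Proof. intros H. assert (Hp : has_partial i f x) by (exists l; exact H). split; auto.
 eapply uniqueness_limite. apply partial_spec; auto. exact H. Qed.

Lemma shift_shift x i s t : shift (shift x i s) i t = shift x i (s + t).
Proof. apply functional_extensionality; intros j; unfold shift; ring. Qed.
Lemma shift_0 x i : shift x i 0 = x.
Proof. apply functional_extensionality; intros j; unfold shift; ring. Qed.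
Lemma shift_comm x i j s t : shift (shift x i s) j t = shift (shift x j t) i s.
Proof. apply functional_extensionality; intros m; unfold shift; ring. Qed.

Lemma ebasis_abs i j : Rabs (ebasis i j) <= 1.
Proof. unfold ebasis; destruct (Nat.eqb i j); [rewrite Rabs_R1|rewrite Rabs_R0]; lra. Qed.
Lemma ebasis_ne i j : i <> j -> ebasis i j = 0.
Proof. intros H; unfold ebasis. apply Nat.eqb_neq in H. rewrite H. auto. Qed.
Lemma ebasis_eq i : ebasis i i = 1.
Proof. unfold ebasis. rewrite Nat.eqb_refl. auto. Qed.

Lemma in_Rn_shift n x i t : in_Rn n x -> (i < n)%nat -> in_Rn n (shift x i t).
Proof. intros H Hi j Hj. unfold shift. rewrite H, ebasis_ne by lia. ring. Qed.

Lemma abs_shift_dev x i t j : Rabs (shift x i t j - x j) <= Rabs t.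
Proof. unfold shift. replace (x j + t * ebasis i j - x j) with (t * ebasis i j) by ring.
 rewrite Rabs_mult. pose proof (ebasis_abs i j). pose proof (Rabs_pos t). pose proof (Rabs_pos (ebasis i j)). nra. Qed.

Lemma open_shift n U x i : open_in n U -> U x -> (i < n)%nat ->
  exists d, 0 < d /\ forall t, Rabs t < d -> U (shift x i t).
Proof. intros [H1 H2] Hx Hi. destruct (H2 x Hx) as [d [Hd Hy]]. exists d; split; auto.
 intros t Ht. apply Hy. apply in_Rn_shift; auto. intros j Hj. pose proof (abs_shift_dev x i t j); lra. Qed.

Lemma pd_line i f y s : has_partial i f (shift y i s) ->
  derivable_pt_lim (fun s' => f (shift y i s')) s (partial i f (shift y i s)).
Proof. intros H. apply D_translate. apply partial_spec in H. unfold pd in H.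
 eapply D_ext; [|exact H]. intros t; simpl. rewrite shift_shift. auto. Qed.

Lemma pd_local n V f g x i l : open_in n V -> V x -> (i < n)%nat ->
  (forall y, V y -> f y = g y) -> pd i f x l -> pd i g x l.
Proof. intros HV Hx Hi E H. destruct (open_shift n V x i HV Hx Hi) as [d [Hd Hs]].
 unfold pd. apply (D_local (fun t => f (shift x i t)) _ _ _ d Hd); auto. intros t Ht. apply E, Hs. rewrite Rminus_0_r in Ht; auto. Qed.

Lemma partial_local n V f g x i : open_in n V -> V x -> (i < n)%nat ->
  (forall y, V y -> f y = g y) -> has_partial i f x -> has_partial i g x /\ partial i g x = partial i f x.
Proof. intros HV Hx Hi E H. apply partial_spec in H. apply partial_eq. eapply pd_local; eauto. Qed.

Lemma pd_plus i f g x a b : pd i f x a -> pd i g x b -> pd i (fun y => f y + g y) x (a + b).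
Proof. intros; unfold pd; apply D_plus; auto. Qed.
Lemma pd_mult i f g x a b : pd i f x a -> pd i g x b -> pd i (fun y => f y * g y) x (a * g x + f x * b).
Proof. intros H1 H2; unfold pd. pose proof (D_mult _ _ 0 a b H1 H2). simpl in H. rewrite shift_0 in H. exact H. Qed.
Lemma pd_const i c x : pd i (fun _ => c) x 0.
Proof. exact (D_const c 0). Qed.
Lemma pd_inv i f x a : pd i f x a -> f x <> 0 -> pd i (fun y => / f y) x (- a / (f x)^2).
Proof. intros H Hn. unfold pd. pose proof (D_inv _ 0 a H). simpl in H0. rewrite shift_0 in H0. apply H0. auto. Qed.
Lemma pd_ln i f x a : pd i f x a -> 0 < f x -> pd i (fun y => ln (f y)) x (a / f x).
Proof. intros H Hn. unfold pd. pose proof (D_ln _ 0 a H). simpl in H0. rewrite shift_0 in H0. apply H0. auto. Qed.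

Lemma mult_close a0 b0 eps : 0 < eps -> exists e, 0 < e /\
  forall a b, Rabs (a - a0) < e -> Rabs (b - b0) < e -> Rabs (a * b - a0 * b0) < eps.
Proof. intros He. set (M := Rabs a0 + Rabs b0 + 1).
 assert (HM : 0 < M) by (unfold M; pose proof (Rabs_pos a0); pose proof (Rabs_pos b0); lra).
 exists (Rmin 1 (eps / M)). split. apply Rmin_pos; [lra| apply Rdiv_lt_0_compat; auto].
 intros a b Ha Hb. pose proof (Rmin_l 1 (eps/M)). pose proof (Rmin_r 1 (eps/M)).
 set (e := Rmin 1 (eps / M)) in *.
 replace (a * b - a0 * b0) with ((a - a0) * (b - b0) + a0 * (b - b0) + b0 * (a - a0)) by ring.
 eapply Rle_lt_trans. apply Rabs_triang. eapply Rle_lt_trans. apply Rplus_le_compat_r, Rabs_triang.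
 rewrite !Rabs_mult.
 pose proof (Rabs_pos (a - a0)). pose proof (Rabs_pos (b - b0)). pose proof (Rabs_pos a0). pose proof (Rabs_pos b0).
 assert (e * M <= eps). { apply Rle_trans with (eps / M * M). apply Rmult_le_compat_r; lra. right; field; lra. }
 assert (Rabs (a - a0) * Rabs (b - b0) <= e * Rabs (b - b0)) by (apply Rmult_le_compat_r; lra).
 assert (Rabs a0 * Rabs (b - b0) <= Rabs a0 * e) by (apply Rmult_le_compat_l; lra).
 assert (Rabs b0 * Rabs (a - a0) <= Rabs b0 * e) by (apply Rmult_le_compat_l; lra).
 assert (e * Rabs (b - b0) < e * 1 ) by (apply Rmult_lt_compat_l; lra).
 unfold M in *. nra. Qed.

Lemma inv_close b0 eps : b0 <> 0 -> 0 < eps -> exists e, 0 < e /\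
  forall b, Rabs (b - b0) < e -> b <> 0 /\ Rabs (/ b - / b0) < eps.
Proof. intros Hb He. pose proof (Rabs_pos_lt _ Hb) as Hp.
 exists (Rmin (Rabs b0 / 2) (eps * (Rabs b0 * Rabs b0) / 2)). split.
 apply Rmin_pos; [lra|]. apply Rdiv_lt_0_compat; [|lra]. apply Rmult_lt_0_compat; nra.
 intros b Hbb. pose proof (Rmin_l (Rabs b0 / 2) (eps * (Rabs b0 * Rabs b0) / 2)).
 pose proof (Rmin_r (Rabs b0 / 2) (eps * (Rabs b0 * Rabs b0) / 2)).
 assert (Hb1 : Rabs b0 / 2 < Rabs b).
 { pose proof (Rabs_triang_inv b0 b). rewrite <- Rabs_Ropp in Hbb. replace (- (b - b0)) with (b0 - b) in Hbb by ring. lra. }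
 assert (b <> 0) by (intro; subst; rewrite Rabs_R0 in Hb1; lra). split; auto.
 replace (/ b - / b0) with ((b0 - b) / (b * b0)) by (field; auto).
 unfold Rdiv. rewrite Rabs_mult, Rabs_inv, Rabs_mult. rewrite <- Rabs_Ropp in Hbb. replace (- (b - b0)) with (b0 - b) in Hbb by ring.
 apply Rmult_lt_reg_r with (Rabs b * Rabs b0). nra.
 rewrite Rmult_assoc, Rinv_l by nra. rewrite Rmult_1_r.
 assert (eps * (Rabs b0 * Rabs b0) / 2 <= eps * (Rabs b * Rabs b0)).
 { assert (Rabs b0 * Rabs b0 / 2 <= Rabs b * Rabs b0) by nra. nra. }
 lra. Qed.

Lemma cont_const n V c : continuous_on n V (fun _ => c).
Proof. intros x Hx eps He. exists 1; split; [lra|]. intros. rewrite Rminus_diag, Rabs_R0; auto. Qed.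

Lemma cont_plus n V f g : continuous_on n V f -> continuous_on n V g -> continuous_on n V (fun y => f y + g y).
Proof. intros Hf Hg x Hx eps He.
 destruct (Hf x Hx (eps/2) ltac:(lra)) as [d1 [Hd1 H1]]. destruct (Hg x Hx (eps/2) ltac:(lra)) as [d2 [Hd2 H2]].
 exists (Rmin d1 d2); split. apply Rmin_pos; auto. intros y Hy Hc.
 assert (close n d1 y x) by (intros i Hi; specialize (Hc i Hi); pose proof (Rmin_l d1 d2); lra).
 assert (close n d2 y x) by (intros i Hi; specialize (Hc i Hi); pose proof (Rmin_r d1 d2); lra).
 specialize (H1 y Hy H). specialize (H2 y Hy H0).
 replace (f y + g y - (f x + g x)) with ((f y - f x) + (g y - g x)) by ring.
 eapply Rle_lt_trans. apply Rabs_triang. lra. Qed.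

Lemma cont_mult n V f g : continuous_on n V f -> continuous_on n V g -> continuous_on n V (fun y => f y * g y).
Proof. intros Hf Hg x Hx eps He. destruct (mult_close (f x) (g x) eps He) as [e [He' Hm]].
 destruct (Hf x Hx e He') as [d1 [Hd1 H1]]. destruct (Hg x Hx e He') as [d2 [Hd2 H2]].
 exists (Rmin d1 d2); split. apply Rmin_pos; auto. intros y Hy Hc.
 assert (close n d1 y x) by (intros i Hi; specialize (Hc i Hi); pose proof (Rmin_l d1 d2); lra).
 assert (close n d2 y x) by (intros i Hi; specialize (Hc i Hi); pose proof (Rmin_r d1 d2); lra).
 apply Hm; auto. Qed.

Lemma cont_inv n V g : continuous_on n V g -> (forall y, V y -> g y <> 0) -> continuous_on n V (fun y => / g y).
Proof. intros Hg Hn x Hx eps He. destruct (inv_close (g x) eps (Hn x Hx) He) as [e [He' Hm]].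
 destruct (Hg x Hx e He') as [d1 [Hd1 H1]]. exists d1; split; auto. intros y Hy Hc. apply Hm; auto. Qed.

Lemma cont_ext n V f g : continuous_on n V f -> (forall y, V y -> f y = g y) -> continuous_on n V g.
Proof. intros Hf E x Hx eps He. destruct (Hf x Hx eps He) as [d [Hd H]]. exists d; split; auto.
 intros y Hy Hc. rewrite <- !E; auto. Qed.

Lemma cont_sub n V V' f : (forall y, V' y -> V y) -> continuous_on n V f -> continuous_on n V' f.
Proof. intros S Hf x Hx eps He. destruct (Hf x (S x Hx) eps He) as [d [Hd H]]. exists d; split; auto. Qed.

Lemma Ck_cont n m V f : Ck n m V f -> continuous_on n V f.
Proof. destruct m; simpl; tauto. Qed.

Lemma Ck_weak n m V f : Ck n (S m) V f -> Ck n m V f.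
Proof. revert f. induction m; intros f H; simpl in *. tauto.
 destruct H as [H1 [H2 H3]]. repeat split; auto. Qed.

Lemma Ck_ext n m V f g : open_in n V -> (forall y, V y -> f y = g y) -> Ck n m V f -> Ck n m V g.
Proof. intros HV. revert f g. induction m; intros f g E H; simpl in *.
 - eapply cont_ext; eauto.
 - destruct H as [H1 [H2 H3]]. split; [eapply cont_ext; eauto|]. split.
   + intros i x Hi Hx. eapply partial_local; eauto.
   + intros i Hi. apply (IHm (partial i f)); auto. intros y Hy. symmetry. eapply partial_local; eauto. Qed.

Lemma Ck_sub n m V V' f : (forall y, V' y -> V y) -> Ck n m V f -> Ck n m V' f.
Proof. intros S. revert f. induction m; intros f H; simpl in *. eapply cont_sub; eauto.
 destruct H as [H1 [H2 H3]]. split; [eapply cont_sub; eauto|]. split; auto. Qed.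

Lemma Ck_const n m V c : Ck n m V (fun _ => c).
Proof. revert c. induction m; intros c; simpl. apply cont_const. split; [apply cont_const|]. split.
 - intros i x _ _. exists 0. exact (pd_const i c x).
 - intros i Hi. assert (partial i (fun _ : vec => c) = fun _ => 0).
   { apply functional_extensionality; intros x. apply (partial_eq i _ x 0). exact (pd_const i c x). }
   rewrite H; auto. Qed.

Lemma Ck_plus n m V f g : open_in n V -> Ck n m V f -> Ck n m V g -> Ck n m V (fun y => f y + g y).
Proof. intros HV. revert f g. induction m; intros f g Hf Hg; simpl in *. apply cont_plus; auto.
 destruct Hf as [F1 [F2 F3]]; destruct Hg as [G1 [G2 G3]]. split; [apply cont_plus; auto|]. split.
 - intros i x Hi Hx. exists (partial i f x + partial i g x). apply pd_plus; apply partial_spec; auto.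
 - intros i Hi. apply (Ck_ext n m V (fun y => partial i f y + partial i g y)); auto.
   intros y Hy. symmetry. apply partial_eq. apply pd_plus; apply partial_spec; auto. Qed.

Lemma Ck_mult n m V f g : open_in n V -> Ck n m V f -> Ck n m V g -> Ck n m V (fun y => f y * g y).
Proof. intros HV. revert f g. induction m; intros f g Hf Hg. simpl in *. apply cont_mult; auto.
 pose proof (Ck_weak _ _ _ _ Hf) as Wf. pose proof (Ck_weak _ _ _ _ Hg) as Wg. simpl in Hf, Hg.
 destruct Hf as [F1 [F2 F3]]; destruct Hg as [G1 [G2 G3]]. simpl. split; [apply cont_mult; auto|]. split.
 - intros i x Hi Hx. eexists. apply pd_mult; apply partial_spec; auto.
 - intros i Hi. apply (Ck_ext n m V (fun y => partial i f y * g y + f y * partial i g y)); auto.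
   intros y Hy. symmetry. apply partial_eq. apply pd_mult; apply partial_spec; auto.
   apply Ck_plus; auto. Qed.

Lemma Ck_inv n m V g : open_in n V -> (forall y, V y -> g y <> 0) -> Ck n m V g -> Ck n m V (fun y => / g y).
Proof. intros HV Hn. revert g Hn. induction m; intros g Hn Hg. simpl in *. apply cont_inv; auto.
 pose proof (Ck_weak _ _ _ _ Hg) as Wg. simpl in Hg.
 destruct Hg as [G1 [G2 G3]]. simpl. split; [apply cont_inv; auto|]. split.
 - intros i x Hi Hx. eexists. apply pd_inv; auto. apply partial_spec; auto.
 - intros i Hi. apply (Ck_ext n m V (fun y => (-1) * partial i g y * ((/ g y) * (/ g y)))); auto.
   intros y Hy. symmetry. rewrite (proj2 (partial_eq _ _ _ _ (pd_inv i g y _ (partial_spec _ _ _ (G2 i y Hi Hy)) (Hn y Hy)))).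
   field. auto.
   apply Ck_mult; auto. apply Ck_mult; auto. apply Ck_const. apply Ck_mult; auto. Qed.

Definition vadd (x : vec) (t : R) (v : vec) : vec := fun j => x j + t * v j.
Definition trunc (v : vec) (m : nat) : vec := fun j => if Nat.ltb j m then v j else 0.

Definition C1on n U F := (forall i y, (i < n)%nat -> U y -> has_partial i F y) /\
  (forall i, (i < n)%nat -> continuous_on n U (partial i F)).

Lemma D_step n U F x w v m M : open_in n U -> U x -> C1on n U F -> (m < n)%nat -> in_Rn n w ->
  0 <= M -> (forall j, (j < n)%nat -> Rabs (w j) <= M) -> Rabs (v m) <= M ->
  derivable_pt_lim (fun t => F (shift (vadd x t w) m (t * v m)) - F (vadd x t w)) 0 (partial m F x * v m).
Proof. intros HU Hx [HF1 HF2] Hm Hw HM Hwb Hvb eps Heps.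
 destruct HU as [HUr HUo]. destruct (HUo x Hx) as [d0 [Hd0 Hball]].
 set (eps' := eps / (Rabs (v m) + 1)).
 assert (He' : 0 < eps') by (unfold eps'; apply Rdiv_lt_0_compat; [lra| pose proof (Rabs_pos (v m)); lra]).
 destruct (HF2 m Hm x Hx eps' He') as [d1 [Hd1 Hc]].
 set (d := Rmin d0 d1). assert (Hd : 0 < d) by (apply Rmin_pos; auto).
 assert (Hdel : 0 < d / (2 * M + 1)) by (apply Rdiv_lt_0_compat; lra).
 exists (mkposreal _ Hdel). simpl. intros h Hh Hl.
 set (y := vadd x h w).
 assert (Hclose : forall s, Rabs s <= Rabs (h * v m) -> in_Rn n (shift y m s) /\ close n d (shift y m s) x).
 { intros s Hs. split.
   - intros j Hj. unfold shift, y, vadd. rewrite (HUr x Hx j Hj), Hw, ebasis_ne by lia. ring.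
   - intros j Hj. unfold shift, y, vadd.
     replace (x j + h * w j + s * ebasis m j - x j) with (h * w j + s * ebasis m j) by ring.
     eapply Rle_lt_trans. apply Rabs_triang. rewrite !Rabs_mult.
     rewrite Rabs_mult in Hs. pose proof (ebasis_abs m j). pose proof (Hwb j Hj).
     pose proof (Rabs_pos h). pose proof (Rabs_pos s). pose proof (Rabs_pos (w j)). pose proof (Rabs_pos (ebasis m j)).
     assert (Rabs h * (2 * M + 1) < d). { apply Rmult_lt_reg_r with (/ (2 * M + 1)). apply Rinv_0_lt_compat; lra.
       rewrite Rmult_assoc, Rinv_r, Rmult_1_r by lra. exact Hl. }
     assert (Rabs h * Rabs (w j) <= Rabs h * M) by (apply Rmult_le_compat_l; lra).
     assert (Rabs s * Rabs (ebasis m j) <= Rabs s) by nra.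
     assert (Rabs h * Rabs (v m) <= Rabs h * M) by (apply Rmult_le_compat_l; lra).
     nra. }
 assert (HU' : forall s, Rabs s <= Rabs (h * v m) -> U (shift y m s)).
 { intros s Hs. destruct (Hclose s Hs). apply Hball; auto. intros j Hj. specialize (H0 j Hj).
   pose proof (Rmin_l d0 d1). unfold d in *. lra. }
 destruct (MVT_sym (fun s => F (shift y m s)) (fun s => partial m F (shift y m s)) (h * v m)) as [sg [Hsg Heq]].
 { intros s Hs. apply pd_line. apply HF1; auto. }
 rewrite shift_0 in Heq. rewrite Rplus_0_l. fold y.
 assert (E0 : vadd x 0 w = x) by (apply functional_extensionality; intros j; unfold vadd; ring).
 rewrite Rmult_0_l, E0, shift_0, Rminus_diag, Rminus_0_r. rewrite Heq.
 replace (partial m F (shift y m sg) * (h * v m) / h - partial m F x * v m) with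
   (v m * (partial m F (shift y m sg) - partial m F x)) by (field; auto).
 rewrite Rabs_mult.
 assert (Rabs (partial m F (shift y m sg) - partial m F x) < eps').
 { apply Hc. apply HU'; auto. intros j Hj. destruct (Hclose sg Hsg) as [_ Hcl]. specialize (Hcl j Hj).
   pose proof (Rmin_r d0 d1). unfold d in *. lra. }
 assert (Rabs (v m) * eps' < eps).
 { assert (eps' * (Rabs (v m) + 1) = eps) by (unfold eps'; field; pose proof (Rabs_pos (v m)); lra).
   pose proof (Rabs_pos (v m)). nra. }
 pose proof (Rabs_pos (v m)). pose proof (Rabs_pos (partial m F (shift y m sg) - partial m F x)). nra. Qed.

Lemma chain_rule n U F x v : open_in n U -> U x -> C1on n U F -> in_Rn n v ->
  derivable_pt_lim (fun t => F (vadd x t v)) 0 (fsum n (fun i => partial i F x * v i)).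
Proof. intros HU Hx HF Hv.
 set (M := fsum n (fun j => Rabs (v j))). assert (HM : 0 <= M) by apply fsum_abs_nonneg.
 assert (Hgen : forall m, (m <= n)%nat -> derivable_pt_lim (fun t => F (vadd x t (trunc v m))) 0 (fsum m (fun i => partial i F x * v i))).
 { induction m; intros Hm.
   - simpl. eapply D_ext; [|apply (D_const (F x))]. intros t; simpl. f_equal. apply functional_extensionality; intros j. unfold vadd, trunc. simpl. ring.
   - assert (Hm' : (m < n)%nat) by lia.
     assert (Hw : in_Rn n (trunc v m)) by (intros j Hj; unfold trunc; destruct (Nat.ltb j m); auto).
     assert (Hwb : forall j, (j < n)%nat -> Rabs (trunc v m j) <= M).
     { intros j Hj. unfold trunc. destruct (Nat.ltb j m). apply fsum_abs_le; auto. rewrite Rabs_R0; auto. }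
     assert (Hvb : Rabs (v m) <= M) by (apply fsum_abs_le; lia).
     pose proof (D_step n U F x (trunc v m) v m M HU Hx HF Hm' Hw HM Hwb Hvb) as Hs.
     simpl. eapply D_ext; [| apply D_plus; [apply IHm; lia| exact Hs]].
     intros t. simpl. replace (vadd x t (trunc v (S m))) with (shift (vadd x t (trunc v m)) m (t * v m)). ring.
       apply functional_extensionality; intros j. unfold shift, vadd, trunc, ebasis.
       destruct (Nat.ltb_spec j m); destruct (Nat.ltb_spec j (S m)); destruct (Nat.eqb_spec m j); subst; try lia; ring. }
 eapply D_ext; [|apply (Hgen n (le_n n))]. intros t. simpl. f_equal. apply functional_extensionality; intros j.
 unfold vadd, trunc. destruct (Nat.ltb_spec j n); auto. rewrite (Hv j) by lia. ring. Qed.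

Definition cone (U : vec -> Prop) := forall x l, U x -> 0 < l -> U (vscale l x).

Lemma partial_homog n U F x l C i : open_in n U -> U x -> (i < n)%nat -> 0 < l ->
  (forall y, U y -> F (vscale l y) = C * F y) -> has_partial i F x ->
  pd i F (vscale l x) (C / l * partial i F x).
Proof. intros HU Hx Hi Hl HF Hp. destruct (open_shift n U x i HU Hx Hi) as [d [Hd Hs]].
 assert (H0 : derivable_pt_lim (fun s => F (shift x i s)) (/ l * 0) (partial i F x)).
 { rewrite Rmult_0_r. apply partial_spec; auto. }
 pose proof (D_scal C _ 0 _ (D_comp (fun t => / l * t) _ 0 _ _ (D_lin (/ l) 0) H0)) as H1.
 unfold pd. replace (C / l * partial i F x) with (C * (partial i F x * / l)) by (field; lra).
 apply (D_local _ _ 0 _ (l * d)) with (1 := Rmult_lt_0_compat l d Hl Hd) (3 := H1).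
 intros t Ht. rewrite Rminus_0_r in Ht. simpl. rewrite <- HF. f_equal.
 apply functional_extensionality; intros j. unfold vscale, shift. field; lra.
 apply Hs. rewrite Rabs_mult, Rabs_inv, (Rabs_right l) by lra.
 apply Rmult_lt_reg_l with l; auto. rewrite <- Rmult_assoc, Rinv_r, Rmult_1_l by lra. auto. Qed.

Lemma Rpower_1_base p : Rpower 1 p = 1.
Proof. unfold Rpower. rewrite ln_1, Rmult_0_r, exp_0. auto. Qed.

Lemma Rpower_pos x p : 0 < Rpower x p.
Proof. unfold Rpower. apply exp_pos. Qed.

Lemma euler n U F x p : open_in n U -> cone U -> U x -> C1on n U F ->
  (forall y l, U y -> 0 < l -> F (vscale l y) = Rpower l p * F y) ->
  fsum n (fun i => partial i F x * x i) = p * F x.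
Proof. intros HU Hc Hx HF Hh.
 assert (Hv : in_Rn n x) by (apply (proj1 HU); auto).
 pose proof (chain_rule n U F x x HU Hx HF Hv) as H1.
 assert (H2 : derivable_pt_lim (fun t => Rpower (1 + t) p * F x) 0 (p * F x)).
 { pose proof (D_mult _ _ 0 _ _ (D_comp (fun t => 1 + t) (fun s => Rpower s p) 0 _ _
      (D_plus _ _ 0 _ _ (D_const 1 0) (D_id 0)) (derivable_pt_lim_power (1 + 0) p ltac:(lra))) (D_const (F x) 0)) as H.
   replace (p * F x) with ((p * Rpower (1 + 0) (p - 1) * (0 + 1)) * F x + Rpower (1 + 0) p * 0).
   exact H. rewrite Rplus_0_r, Rpower_1_base. ring. }
 eapply uniqueness_limite; [exact H1|]. apply (D_local _ _ 0 _ 1) with (1 := Rlt_0_1) (3 := H2).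
 intros t Ht. rewrite Rminus_0_r in Ht. rewrite <- Hh; auto. f_equal.
 apply functional_extensionality; intros j. unfold vscale, vadd. ring.
 pose proof (Rabs_def2 t 1 Ht). lra. Qed.

Definition Delta (f : vec -> R) x i j t :=
  f (shift (shift x j t) i t) - f (shift x i t) - f (shift x j t) + f x.

Lemma schwarz_approx n U f x i j : open_in n U -> U x -> (i < n)%nat -> (j < n)%nat ->
  (forall y, U y -> has_partial i f y) -> (forall y, U y -> has_partial j (partial i f) y) ->
  continuous_on n U (partial j (partial i f)) ->
  forall eps, 0 < eps -> exists del, 0 < del /\ forall t, 0 < t < del ->
    Rabs (Delta f x i j t / (t * t) - partial j (partial i f) x) < eps.
Proof. intros HU Hx Hi Hj H1 H2 Hc eps He.
 destruct HU as [HUr HUo]. destruct (HUo x Hx) as [d0 [Hd0 Hball]].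
 destruct (Hc x Hx eps He) as [d1 [Hd1 Hcl]].
 exists (Rmin d0 d1 / 2). split. pose proof (Rmin_pos _ _ Hd0 Hd1); lra.
 intros t Ht. pose proof (Rmin_l d0 d1). pose proof (Rmin_r d0 d1).
 assert (HP : forall s tau, Rabs s <= t -> Rabs tau <= t ->
   U (shift (shift x i s) j tau) /\ close n d1 (shift (shift x i s) j tau) x).
 { intros s tau Hs Htau.
   assert (Hin : in_Rn n (shift (shift x i s) j tau)) by (apply in_Rn_shift; auto; apply in_Rn_shift; auto).
   assert (Hcl2 : forall m, Rabs (shift (shift x i s) j tau m - x m) <= 2 * t).
   { intros m. pose proof (abs_shift_dev (shift x i s) j tau m). pose proof (abs_shift_dev x i s m).
     replace (shift (shift x i s) j tau m - x m) with ((shift (shift x i s) j tau m - shift x i s m) + (shift x i s m - x m)) by ring.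
     eapply Rle_trans. apply Rabs_triang. lra. }
   split. apply Hball; auto. intros m Hm; specialize (Hcl2 m); lra.
   intros m Hm; specialize (Hcl2 m); lra. }
 assert (Hxs : forall s, Rabs s <= t -> U (shift x i s)).
 { intros s Hs. rewrite <- (shift_0 (shift x i s) j). apply HP; auto. rewrite Rabs_R0; lra. }
 assert (Hxjs : forall s, Rabs s <= t -> U (shift (shift x j t) i s)).
 { intros s Hs. rewrite <- shift_comm. apply HP; auto. rewrite Rabs_right; lra. }
 destruct (MVT_sym (fun s => f (shift (shift x j t) i s) - f (shift x i s))
    (fun s => partial i f (shift (shift x j t) i s) - partial i f (shift x i s)) t) as [sg [Hsg Hm1]].
 { intros s Hs. rewrite (Rabs_right t) in Hs by lra. apply D_minus; apply pd_line; apply H1.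
   apply Hxjs; lra. apply Hxs; lra. }
 rewrite (Rabs_right t) in Hsg by lra.
 destruct (MVT_sym (fun tau => partial i f (shift (shift x i sg) j tau))
   (fun tau => partial j (partial i f) (shift (shift x i sg) j tau)) t) as [tg [Htg Hm2]].
 { intros s Hs. rewrite (Rabs_right t) in Hs by lra. apply pd_line. apply H2. apply HP; auto. }
 rewrite (Rabs_right t) in Htg by lra.
 rewrite !shift_0 in Hm1. rewrite shift_0 in Hm2.
 rewrite (shift_comm x i j sg t) in Hm2.
 assert (Delta f x i j t = partial j (partial i f) (shift (shift x i sg) j tg) * t * t).
 { unfold Delta. replace (f (shift (shift x j t) i t) - f (shift x i t) - f (shift x j t) + f x)
     with (f (shift (shift x j t) i t) - f (shift x i t) - (f (shift x j t) - f x)) by ring.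
   rewrite Hm1, Hm2. ring. }
 rewrite H3. replace (partial j (partial i f) (shift (shift x i sg) j tg) * t * t / (t * t)) with
   (partial j (partial i f) (shift (shift x i sg) j tg)) by (field; lra).
 apply Hcl. apply HP; auto. apply HP; auto. Qed.

Lemma schwarz n U f x i j : open_in n U -> U x -> (i < n)%nat -> (j < n)%nat ->
  (forall y, U y -> has_partial i f y) -> (forall y, U y -> has_partial j f y) ->
  (forall y, U y -> has_partial j (partial i f) y) -> (forall y, U y -> has_partial i (partial j f) y) ->
  continuous_on n U (partial j (partial i f)) -> continuous_on n U (partial i (partial j f)) ->
  partial i (partial j f) x = partial j (partial i f) x.
Proof. intros HU Hx Hi Hj A1 A2 A3 A4 C1 C2.
 destruct (Req_dec (partial i (partial j f) x) (partial j (partial i f) x)) as [E|Ne]; auto.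
 exfalso. set (e := Rabs (partial i (partial j f) x - partial j (partial i f) x) / 4).
 assert (He : 0 < e) by (unfold e; apply Rdiv_lt_0_compat; [apply Rabs_pos_lt; lra|lra]).
 destruct (schwarz_approx n U f x i j HU Hx Hi Hj A1 A3 C1 e He) as [d1 [Hd1 P1]].
 destruct (schwarz_approx n U f x j i HU Hx Hj Hi A2 A4 C2 e He) as [d2 [Hd2 P2]].
 set (t := Rmin d1 d2 / 2). assert (0 < Rmin d1 d2) by (apply Rmin_pos; auto).
 pose proof (Rmin_l d1 d2). pose proof (Rmin_r d1 d2).
 specialize (P1 t ltac:(unfold t; lra)). specialize (P2 t ltac:(unfold t; lra)).
 assert (Delta f x j i t = Delta f x i j t) by (unfold Delta; rewrite shift_comm; ring).
 rewrite H2 in P2.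
 assert (Rabs (partial i (partial j f) x - partial j (partial i f) x) <= Rabs (Delta f x i j t / (t * t) - partial j (partial i f) x) + Rabs (Delta f x i j t / (t * t) - partial i (partial j f) x)).
 { replace (partial i (partial j f) x - partial j (partial i f) x) with
     ((Delta f x i j t / (t * t) - partial j (partial i f) x) - (Delta f x i j t / (t * t) - partial i (partial j f) x)) by ring.
   eapply Rle_trans. apply Rabs_triang. rewrite Rabs_Ropp. lra. }
 unfold e in *. lra. Qed.

Record Setting n U h k : Prop := mkS {
  S_open : open_in n U;
  S_cone : cone U;
  S_smooth : smooth_on n U h;
  S_pos : forall x, U x -> 0 < h x;
  S_k : 1 < k;
  S_hom : forall x l, U x -> 0 < l -> h (vscale l x) = Rpower l k * h x }.

Section S.
Lemma smooth_partial n U f i : smooth_on n U f -> (i < n)%nat -> smooth_on n U (partial i f).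
Proof. intros H Hi m. destruct (H (S m)) as [_ [_ H3]]. apply H3; auto. Qed.

Lemma smooth_C1 n U f : smooth_on n U f -> C1on n U f.
Proof. intros H. destruct (H 1%nat) as [_ [H2 H3]]. split; auto. Qed.
End S.

Lemma S_h1 n U h k : Setting n U h k -> forall i y, (i < n)%nat -> U y -> has_partial i h y.
Proof. intros S. apply (smooth_C1 n U h (S_smooth _ _ _ _ S)). Qed.

Lemma S_h2 n U h k : Setting n U h k -> forall i j y, (i < n)%nat -> (j < n)%nat -> U y -> has_partial i (partial j h) y.
Proof. intros S i j y Hi Hj Hy. apply (smooth_C1 n U (partial j h)); auto. apply smooth_partial; auto. apply (S_smooth _ _ _ _ S). Qed.

Lemma S_homP n U h k : Setting n U h k -> forall j y l, (j < n)%nat -> U y -> 0 < l ->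
  partial j h (vscale l y) = Rpower l k / l * partial j h y.
Proof. intros S j y l Hj Hy Hl. apply partial_eq. apply (partial_homog n U h y l (Rpower l k) j); auto. apply (S_open _ _ _ _ S).
 intros; apply (S_hom _ _ _ _ S); auto. eapply S_h1; eauto. Qed.

Lemma S_homPP n U h k : Setting n U h k -> forall i j y l, (i < n)%nat -> (j < n)%nat -> U y -> 0 < l ->
  partial i (partial j h) (vscale l y) = Rpower l k / l / l * partial i (partial j h) y.
Proof. intros S i j y l Hi Hj Hy Hl. apply partial_eq. apply (partial_homog n U (partial j h) y l (Rpower l k / l) i); auto. apply (S_open _ _ _ _ S).
 intros; eapply S_homP; eauto. eapply S_h2; eauto. Qed.

Lemma Rpower_km1 l k : 0 < l -> Rpower l (k - 1) = Rpower l k / l.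
Proof. intros Hl. replace (k - 1) with (k + - (1)) by ring. rewrite Rpower_plus, Rpower_Ropp, Rpower_1 by auto. auto. Qed.

Lemma S_euler1 n U h k : Setting n U h k -> forall x, U x -> dh n h x x = k * h x.
Proof. intros S x Hx. unfold dh. apply (euler n U); auto. apply (S_open _ _ _ _ S). apply (S_cone _ _ _ _ S).
 apply smooth_C1, (S_smooth _ _ _ _ S). apply (S_hom _ _ _ _ S). Qed.

Lemma S_euler2 n U h k : Setting n U h k -> forall x j, U x -> (j < n)%nat ->
  fsum n (fun i => partial i (partial j h) x * x i) = (k - 1) * partial j h x.
Proof. intros S x j Hx Hj. apply (euler n U); auto. apply (S_open _ _ _ _ S). apply (S_cone _ _ _ _ S).
 apply smooth_C1, smooth_partial; auto. apply (S_smooth _ _ _ _ S).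
 intros y l Hy Hl. rewrite Rpower_km1 by auto. eapply S_homP; eauto. Qed.

Lemma S_sym n U h k : Setting n U h k -> forall x i j, U x -> (i < n)%nat -> (j < n)%nat ->
  hess h x i j = hess h x j i.
Proof. intros S x i j Hx Hi Hj. unfold hess. apply (schwarz n U); auto. apply (S_open _ _ _ _ S).
 intros; eapply S_h1; eauto. intros; eapply S_h1; eauto. intros; eapply S_h2; eauto. intros; eapply S_h2; eauto.
 apply (Ck_cont n 0). apply smooth_partial; auto. apply smooth_partial; auto. apply (S_smooth _ _ _ _ S).
 apply (Ck_cont n 0). apply smooth_partial; auto. apply smooth_partial; auto. apply (S_smooth _ _ _ _ S). Qed.

Lemma bil_ext n A B v w : (forall i j, (i < n)%nat -> (j < n)%nat -> A i j = B i j) -> bil n A v w = bil n B v w.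
Proof. intros H. unfold bil. apply fsum_ext; intros i Hi. apply fsum_ext; intros j Hj. rewrite H; auto. Qed.

Lemma bil_decomp n p q A a b v w :
  bil n (fun i j => p * A i j + q * (a i * b j)) v w =
  p * bil n A v w + q * (fsum n (fun i => a i * v i) * fsum n (fun j => b j * w j)).
Proof. unfold bil.
 assert (Hr : forall m f c, fsum m (fun i => f i * c) = fsum m f * c).
 { intros m f c. rewrite Rmult_comm, <- fsum_scal. apply fsum_ext; intros; ring. }
 transitivity (fsum n (fun i => p * fsum n (fun j => A i j * v i * w j) + (q * (a i * v i)) * fsum n (fun j => b j * w j))).
 - apply fsum_ext; intros i Hi. rewrite <- fsum_scal, <- fsum_scal, <- fsum_plus. apply fsum_ext; intros j Hj. ring.
 - rewrite fsum_plus, fsum_scal, Hr, fsum_scal. ring. Qed.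

Lemma bil_lin_l n A p q v1 v2 w : bil n A (fun j => p * v1 j + q * v2 j) w = p * bil n A v1 w + q * bil n A v2 w.
Proof. unfold bil. rewrite <- !fsum_scal, <- fsum_plus. apply fsum_ext; intros i Hi.
 rewrite <- !fsum_scal, <- fsum_plus. apply fsum_ext; intros j Hj. ring. Qed.

Lemma bil_lin_r n A p q v w1 w2 : bil n A v (fun j => p * w1 j + q * w2 j) = p * bil n A v w1 + q * bil n A v w2.
Proof. unfold bil. rewrite <- !fsum_scal, <- fsum_plus. apply fsum_ext; intros i Hi.
 rewrite <- !fsum_scal, <- fsum_plus. apply fsum_ext; intros j Hj. ring. Qed.

Lemma bil_sym n A v w : (forall i j, (i < n)%nat -> (j < n)%nat -> A i j = A j i) -> bil n A v w = bil n A w v.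
Proof. intros H. unfold bil. rewrite fsum_swap. apply fsum_ext; intros i Hi. apply fsum_ext; intros j Hj. rewrite H; auto. ring. Qed.

Lemma bil_zero_l n A v w : (forall i, (i < n)%nat -> v i = 0) -> bil n A v w = 0.
Proof. intros H. unfold bil. apply fsum_zero; intros i Hi. apply fsum_zero; intros j Hj. rewrite H; auto; ring. Qed.

Lemma S_gU_sym n U h k : Setting n U h k -> forall x v w, U x -> gU n h x v w = gU n h x w v.
Proof. intros S x v w Hx. unfold gU. f_equal. apply bil_sym. intros; eapply S_sym; eauto. Qed.

Lemma S_gU_x n U h k : Setting n U h k -> forall x w, U x -> gU n h x x w = - (k - 1) * dh n h x w.
Proof. intros S x w Hx. unfold gU, bil, dh. rewrite fsum_swap.
 assert (Hn: forall m f, - fsum m f = fsum m (fun i => -1 * f i)) by (intros; rewrite fsum_scal; ring).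
 assert (Hr : forall m f c, fsum m (fun i => f i * c) = fsum m f * c).
 { intros m f c. rewrite Rmult_comm, <- fsum_scal. apply fsum_ext; intros; ring. }
 rewrite Hn, <- fsum_scal. apply fsum_ext; intros j Hj.
 replace (-(k-1) * (partial j h x * w j)) with (-1 * (((k-1) * partial j h x) * w j)) by ring.
 rewrite <- (S_euler2 n U h k S x j Hx Hj), <- Hr. unfold hess. reflexivity. Qed.

Lemma Uc_pos n U h k c x : Setting n U h k -> Uc U h k c x -> U x /\ 0 < h x + c /\ 0 < h x - c * (k - 1).
Proof. intros S [Hx Hc]. pose proof (S_pos _ _ _ _ S x Hx). pose proof (S_k _ _ _ _ S).
 destruct (Rle_dec c 0); split; auto; split; nra. Qed.

Lemma Uc_sub U h k c x : Uc U h k c x -> U x.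
Proof. intros [H _]; auto. Qed.

Lemma Uc_open n U h k c : Setting n U h k -> open_in n (Uc U h k c).
Proof. intros S. destruct (S_open _ _ _ _ S) as [H1 H2]. split.
 - intros x [Hx _]. auto.
 - intros x [Hx Hc]. pose proof (Ck_cont n 0 U h (S_smooth _ _ _ _ S 0%nat)) as Hcont.
   set (q := if Rle_dec c 0 then h x + c else h x - c * (k - 1)).
   assert (Hq : 0 < q) by (unfold q; destruct (Rle_dec c 0); lra).
   destruct (Hcont x Hx q Hq) as [d1 [Hd1 Hd]]. destruct (H2 x Hx) as [d0 [Hd0 Hb]].
   exists (Rmin d0 d1). split. apply Rmin_pos; auto. intros y Hy Hcl. pose proof (Rmin_l d0 d1). pose proof (Rmin_r d0 d1).
   assert (Uy : U y) by (apply Hb; auto; intros i Hi; specialize (Hcl i Hi); lra).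
   split; auto. specialize (Hd y Uy ltac:(intros i Hi; specialize (Hcl i Hi); lra)).
   pose proof (Rabs_def2 _ _ Hd). unfold q in *. destruct (Rle_dec c 0); lra. Qed.

Lemma hess_ln n U h k c x i j : Setting n U h k -> Uc U h k c x -> (i < n)%nat -> (j < n)%nat ->
  hess (fun y => ln (h y + c)) x i j = / (h x + c) * hess h x i j + (- / (h x + c) ^ 2) * (partial i h x * partial j h x).
Proof. intros S Hx Hi Hj. pose proof (Uc_open n U h k c S) as HO.
 assert (E : forall y, Uc U h k c y -> (fun y => partial j h y * / (h y + c)) y = partial j (fun y => ln (h y + c)) y).
 { intros y Hy. destruct (Uc_pos n U h k c y S Hy) as [Uy [P1 _]]. symmetry. apply partial_eq.
   replace (partial j h y * / (h y + c)) with ((partial j h y + 0) / (h y + c)) by (field; lra).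
   apply pd_ln; auto. apply pd_plus. apply partial_spec. eapply S_h1; eauto. apply pd_const. }
 destruct (Uc_pos n U h k c x S Hx) as [Ux [P1 _]].
 assert (Hd : pd i (fun y => partial j h y * / (h y + c)) x
   (partial i (partial j h) x * / (h x + c) + partial j h x * (- (partial i h x + 0) / (h x + c) ^ 2))).
 { apply pd_mult. apply partial_spec. eapply S_h2; eauto. apply (pd_inv i (fun y => h y + c)). apply pd_plus.
   apply partial_spec; eapply S_h1; eauto. apply pd_const. lra. }
 unfold hess. pose proof (proj2 (partial_eq _ _ _ _ Hd)) as Hv.
 destruct (partial_local n _ _ _ x i HO Hx Hi E (proj1 (partial_eq _ _ _ _ Hd))) as [_ Hl].
 rewrite Hl, Hv. field. lra. Qed.

Lemma gprime_formula n U h k c x v w : Setting n U h k -> Uc U h k c x ->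
  gprime n h c x v w = / (h x + c) * gU n h x v w + / (h x + c) ^ 2 * (dh n h x v * dh n h x w).
Proof. intros S Hx. unfold gprime, gU, dh.
 rewrite (bil_ext n _ (fun i j => / (h x + c) * hess h x i j + (- / (h x + c) ^ 2) * (partial i h x * partial j h x))).
 rewrite bil_decomp. ring. intros i j Hi Hj. eapply hess_ln; eauto. Qed.

Lemma hess_smooth n U h k c i j : Setting n U h k -> (i < n)%nat -> (j < n)%nat ->
  smooth_on n (Uc U h k c) (fun x => - hess (fun y => ln (h y + c)) x i j).
Proof. intros S Hi Hj m. pose proof (Uc_open n U h k c S) as HO.
 assert (Hsub : forall y, Uc U h k c y -> U y) by apply Uc_sub.
 pose proof (S_smooth _ _ _ _ S) as Hs.
 apply (Ck_ext n m _ (fun x => (-1) * (/ (h x + c) * partial i (partial j h) x + (- 1) * ((/ (h x + c)) * (/ (h x + c))) * (partial i h x * partial j h x)))); auto.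
 - intros y Hy. rewrite (hess_ln n U h k c y i j S Hy Hi Hj). unfold hess. destruct (Uc_pos n U h k c y S Hy) as [_ [P _]]. field. lra.
 - assert (Hinv : Ck n m (Uc U h k c) (fun x => / (h x + c))).
   { apply Ck_inv; auto. intros y Hy. destruct (Uc_pos n U h k c y S Hy) as [_ [P _]]. lra.
     apply Ck_plus; auto. apply (Ck_sub n m U); auto. apply Ck_const. }
   assert (Hp : forall l, (l < n)%nat -> Ck n m (Uc U h k c) (partial l h)).
   { intros l Hl. apply (Ck_sub n m U); auto. apply smooth_partial; auto. }
   assert (Hpp : Ck n m (Uc U h k c) (partial i (partial j h))).
   { apply (Ck_sub n m U); auto. apply smooth_partial; auto. apply smooth_partial; auto. }
   repeat (first [apply Ck_const | apply Ck_plus | apply Ck_mult]; auto). Qed.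

Lemma dh_scale_x n U h k x l v : Setting n U h k -> U x -> 0 < l ->
  dh n h (vscale l x) v = Rpower l k / l * dh n h x v.
Proof. intros S Hx Hl. unfold dh. rewrite <- fsum_scal. apply fsum_ext; intros i Hi.
 rewrite (S_homP n U h k S i x l Hi Hx Hl). ring. Qed.

Lemma gU_scale_x n U h k x l v w : Setting n U h k -> U x -> 0 < l ->
  gU n h (vscale l x) v w = Rpower l k / l / l * gU n h x v w.
Proof. intros S Hx Hl. unfold gU, bil. rewrite <- Ropp_mult_distr_r. f_equal. rewrite <- fsum_scal.
 apply fsum_ext; intros i Hi. rewrite <- fsum_scal. apply fsum_ext; intros j Hj.
 unfold hess. rewrite (S_homPP n U h k S i j x l Hi Hj Hx Hl). ring. Qed.

Lemma dh_scale_v n h x l v : dh n h x (vscale l v) = l * dh n h x v.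
Proof. unfold dh. rewrite <- fsum_scal. apply fsum_ext; intros i Hi. unfold vscale. ring. Qed.

Lemma gU_scale_v n h x l v w : gU n h x (vscale l v) (vscale l w) = l * l * gU n h x v w.
Proof. unfold gU, bil. rewrite <- Ropp_mult_distr_r. f_equal. rewrite <- fsum_scal.
 apply fsum_ext; intros i Hi. rewrite <- fsum_scal. apply fsum_ext; intros j Hj. unfold vscale. ring. Qed.

Lemma gU_pos_ker n U h k x u : Setting n U h k -> U x ->
  (forall x, U x -> h x = 1 -> forall v, nonzero_vec n v -> dh n h x v = 0 -> gU n h x v v > 0) ->
  nonzero_vec n u -> dh n h x u = 0 -> gU n h x u u > 0.
Proof. intros S Hx Hlev Hu Hd. pose proof (S_pos _ _ _ _ S x Hx) as Hp. pose proof (S_k _ _ _ _ S) as Hk.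
 set (l0 := Rpower (h x) (- / k)). assert (Hl0 : 0 < l0) by apply Rpower_pos.
 assert (HC : Rpower l0 k = / h x).
 { unfold l0. rewrite Rpower_mult. replace (- / k * k) with (- (1)) by (field; lra). rewrite Rpower_Ropp, Rpower_1; auto. }
 assert (Hx' : U (vscale l0 x)) by (apply (S_cone _ _ _ _ S); auto).
 assert (Hh1 : h (vscale l0 x) = 1) by (rewrite (S_hom _ _ _ _ S) by auto; rewrite HC; field; lra).
 specialize (Hlev _ Hx' Hh1 u Hu). rewrite (dh_scale_x n U h k) in Hlev by auto. rewrite Hd, Rmult_0_r in Hlev.
 specialize (Hlev eq_refl). rewrite (gU_scale_x n U h k) in Hlev by auto.
 assert (0 < Rpower l0 k / l0 / l0) by (apply Rdiv_lt_0_compat; auto; apply Rdiv_lt_0_compat; auto; apply Rpower_pos).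
 apply Rlt_gt. apply Rmult_lt_reg_l with (Rpower l0 k / l0 / l0); auto. lra. Qed.

Lemma gcheck_formula n U h k x v w : Setting n U h k -> U x ->
  gcheck n h x v w = gU n h x v w + (k - 1) / (k * h x) * (dh n h x v * dh n h x w).
Proof. intros S Hx. unfold gcheck. rewrite !(S_gU_x n U h k S) by auto. rewrite (S_euler1 n U h k S) by auto.
 pose proof (S_pos _ _ _ _ S x Hx). pose proof (S_k _ _ _ _ S). field. repeat split; nra. Qed.

Lemma dh_lin n h x p q v1 v2 : dh n h x (fun j => p * v1 j + q * v2 j) = p * dh n h x v1 + q * dh n h x v2.
Proof. unfold dh. rewrite <- !fsum_scal, <- fsum_plus. apply fsum_ext; intros; ring. Qed.



Lemma gU_quad n U h k x u a : Setting n U h k -> U x ->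
  gU n h x (fun j => 1 * u j + a * x j) (fun j => 1 * u j + a * x j)
  = gU n h x u u - 2 * a * (k - 1) * dh n h x u - a * a * (k - 1) * (k * h x).
Proof. intros S Hx.
 assert (E : gU n h x (fun j => 1 * u j + a * x j) (fun j => 1 * u j + a * x j) =
   1 * (1 * gU n h x u u + a * gU n h x u x) + a * (1 * gU n h x x u + a * gU n h x x x)).
 { unfold gU. rewrite bil_lin_l, !bil_lin_r. ring. }
 rewrite E, (S_gU_sym n U h k S x u x Hx), !(S_gU_x n U h k S) by auto. rewrite (S_euler1 n U h k S) by auto. ring. Qed.

Theorem mainTheorem16
  (n : nat) (U : vec -> Prop) (h : vec -> R) (k : R)
  (HU : domain n U)
  (Hcone : forall x l, U x -> 0 < l -> U (vscale l x))
  (Hsmooth : smooth_on n U h)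
  (Hpos : forall x, U x -> 0 < h x)
  (Hk : 1 < k)
  (Hhom : forall x l, U x -> 0 < l -> h (vscale l x) = Rpower l k * h x)
  (Hlevel : forall x, U x -> h x = 1 -> forall v, nonzero_vec n v ->
              dh n h x v = 0 -> gU n h x v v > 0) :
  (* defining formula for g'_c and item (1) *)
  (forall c x v w, Uc U h k c x ->
     gprime n h c x v w
       = / (h x + c) * gU n h x v w + / (h x + c) ^ 2 * (dh n h x v * dh n h x w)
     /\ gprime n h c x v w
       = / (h x + c) * gcheck n h x v w
         + (h x - c * (k - 1)) / (k * h x) * / (h x + c) ^ 2 * (dh n h x v * dh n h x w))
  (* item (2): g'_c is a Riemannian metric on the open set U_c *)
  /\ (forall c,
        open_in n (Uc U h k c)
        /\ (forall i j, (i < n)%nat -> (j < n)%nat ->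
              smooth_on n (Uc U h k c) (fun x => - hess (fun y => ln (h y + c)) x i j))
        /\ (forall x v w, Uc U h k c x -> gprime n h c x v w = gprime n h c x w v)
        /\ (forall x v, Uc U h k c x -> nonzero_vec n v -> gprime n h c x v v > 0))
  (* item (3): isometry by a scalar multiplication *)
  /\ (forall c c', c * c' > 0 ->
        exists l, 0 < l
          /\ (forall x, Uc U h k c x -> Uc U h k c' (vscale l x))
          /\ (forall y, Uc U h k c' y -> exists x, Uc U h k c x /\ y = vscale l x)
          /\ (forall x v w, Uc U h k c x ->
                gprime n h c' (vscale l x) (vscale l v) (vscale l w) = gprime n h c x v w)).
Proof.
 assert (S : Setting n U h k) by (constructor; auto; apply (proj1 HU)).
 split; [|split].
 - intros c x v w Hx. destruct (Uc_pos n U h k c x S Hx) as [Ux [P1 P2]]. split.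
   + apply (gprime_formula n U h k); auto.
   + rewrite (gprime_formula n U h k), (gcheck_formula n U h k) by auto. pose proof (Hpos x Ux). field. repeat split; nra.
 - intros c. split; [apply (Uc_open n U h k c S)|]. split; [intros; apply (hess_smooth n U h k); auto|]. split.
   + intros x v w Hx. rewrite !(gprime_formula n U h k) by auto. rewrite (S_gU_sym n U h k S x v w (Uc_sub _ _ _ _ _ Hx)). ring.
   + intros x v Hx Hv. destruct (Uc_pos n U h k c x S Hx) as [Ux [P1 P2]]. pose proof (Hpos x Ux) as Ph.
     set (a := dh n h x v / (k * h x)). set (u := fun j => 1 * v j + (- a) * x j).
     assert (Hdu : dh n h x u = 0).
     { unfold u. rewrite dh_lin, (S_euler1 n U h k S) by auto. unfold a. field. split; lra. }
     assert (Hvu : v = fun j => 1 * u j + a * x j) by (apply functional_extensionality; intros j; unfold u; ring).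
     rewrite (gprime_formula n U h k) by auto. rewrite Hvu. rewrite (gU_quad n U h k) by auto.
     rewrite dh_lin, Hdu, (S_euler1 n U h k S) by auto.
     set (G := gU n h x u u).
     assert (HG : 0 <= G /\ (G = 0 -> a <> 0)).
     { destruct (classic (nonzero_vec n u)) as [Hn|Hn].
       - pose proof (gU_pos_ker n U h k x u S Ux Hlevel Hn Hdu). split; [unfold G; lra|]. intros; unfold G in *; lra.
       - assert (Hz : forall j, (j < n)%nat -> u j = 0).
         { intros j Hj. destruct (Req_dec (u j) 0); auto. exfalso. apply Hn. exists j; auto. }
         assert (G = 0) by (unfold G, gU; rewrite bil_zero_l; auto; ring). split; [lra|].
         intros _ Ha. destruct Hv as [j [Hj Hvj]]. apply Hvj. rewrite Hvu, Hz, Ha by auto. ring. }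
     replace (/ (h x + c) * (G - 2 * a * (k - 1) * 0 - a * a * (k - 1) * (k * h x)) + / (h x + c) ^ 2 * ((1 * 0 + a * (k * h x)) * (1 * 0 + a * (k * h x))))
       with (G / (h x + c) + (a * a) * (k * h x) * (h x - c * (k - 1)) / ((h x + c) * (h x + c))) by (field; lra).
     destruct HG as [HG1 HG2]. apply Rlt_gt.
     assert (0 <= G / (h x + c)) by (apply Rmult_le_pos; [lra| left; apply Rinv_0_lt_compat; lra]).
     assert (0 <= (a * a) * (k * h x) * (h x - c * (k - 1)) / ((h x + c) * (h x + c))).
     { apply Rmult_le_pos; [|left; apply Rinv_0_lt_compat; nra]. apply Rmult_le_pos; [|lra]. apply Rmult_le_pos; nra. }
     destruct (Req_dec G 0) as [G0|G0].
     * specialize (HG2 G0). assert (0 < a * a) by (apply Rsqr_pos_lt; auto).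
       assert (0 < (a * a) * (k * h x) * (h x - c * (k - 1)) / ((h x + c) * (h x + c))).
       { apply Rdiv_lt_0_compat; [|nra]. apply Rmult_lt_0_compat; [|lra]. apply Rmult_lt_0_compat; nra. }
       lra.
     * assert (0 < G / (h x + c)) by (apply Rdiv_lt_0_compat; lra). lra.
 - intros c c' Hcc.
   set (l := Rpower (c' / c) (/ k)).
   assert (Hq : 0 < c' / c).
   { destruct (Rtotal_order c 0) as [H|[H|H]]. apply Rdiv_neg_neg; nra. subst; nra. apply Rdiv_lt_0_compat; nra. }
   assert (Hl : 0 < l) by apply Rpower_pos.
   assert (HC : Rpower l k = c' / c).
   { unfold l. rewrite Rpower_mult. replace (/ k * k) with 1 by (field; lra). apply Rpower_1; auto. }
   assert (Hc0 : c <> 0) by (intro; subst; nra).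
   exists l. split; auto. split; [|split].
   + intros x [Ux Hx]. split. apply Hcone; auto. rewrite Hhom, HC by auto. pose proof (Hpos x Ux).
     destruct (Rle_dec c 0); destruct (Rle_dec c' 0).
     * replace (c' / c * h x + c') with (c' / c * (h x + c)) by (field; auto). apply Rmult_lt_0_compat; lra.
     * exfalso; nra.
     * exfalso; nra.
     * replace (c' / c * h x - c' * (k - 1)) with (c' / c * (h x - c * (k - 1))) by (field; auto). apply Rmult_lt_0_compat; lra.
   + intros y [Uy Hy]. exists (vscale (/ l) y). assert (Ux : U (vscale (/ l) y)) by (apply Hcone; auto; apply Rinv_0_lt_compat; auto).
     assert (Hyx : y = vscale l (vscale (/ l) y)) by (apply functional_extensionality; intros j; unfold vscale; field; lra).
     split; auto. split; auto. rewrite Hyx, Hhom, HC in Hy by auto. pose proof (Hpos _ Ux).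
     assert (Hc' : c' <> 0) by (intro; subst; nra).
     destruct (Rle_dec c 0); destruct (Rle_dec c' 0).
     * replace (c' / c * h (vscale (/ l) y) + c') with (c' / c * (h (vscale (/ l) y) + c)) in Hy by (field; auto).
       apply Rmult_lt_reg_l with (c' / c); auto. lra.
     * exfalso; nra.
     * exfalso; nra.
     * replace (c' / c * h (vscale (/ l) y) - c' * (k - 1)) with (c' / c * (h (vscale (/ l) y) - c * (k - 1))) in Hy by (field; auto).
       apply Rmult_lt_reg_l with (c' / c); auto. lra.
   + intros x v w Hx. destruct (Uc_pos n U h k c x S Hx) as [Ux [P1 P2]].
     assert (Hx' : Uc U h k c' (vscale l x)).
     { split. apply Hcone; auto. rewrite Hhom, HC by auto. pose proof (Hpos x Ux).
       destruct (Rle_dec c 0); destruct (Rle_dec c' 0).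
       * replace (c' / c * h x + c') with (c' / c * (h x + c)) by (field; auto). apply Rmult_lt_0_compat; lra.
       * exfalso; nra.
       * exfalso; nra.
       * replace (c' / c * h x - c' * (k - 1)) with (c' / c * (h x - c * (k - 1))) by (field; auto). apply Rmult_lt_0_compat; lra. }
     rewrite !(gprime_formula n U h k) by auto.
     rewrite gU_scale_v, !dh_scale_v, (gU_scale_x n U h k), !(dh_scale_x n U h k), Hhom, HC by auto.
     replace (c' / c * h x + c') with (c' / c * (h x + c)) by (field; auto).
     assert (Hc'0 : c' <> 0) by (intro; subst; nra). assert (Hq0 : c' / c <> 0) by lra.
     field. repeat split; try lra; auto.
Qed.
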